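(* Let $S$ be a system of dimension $m\ge2$ with Hamiltonian $H_S$, maximal energy $E^S_{\max}$, Gibbs state $\tau_S$ and partition function $Z_S=\mathrm{tr}(e^{-\beta H_S})$, and let $\Pi^S_{\max}=|E^S_{\max}\rangle\langle E^S_{\max}|$ be a pure eigenstate of energy $E^S_{\max}$. Let the catalyst $C$ have a Hamiltonian $H_C$ with discrete spectrum consisting of nonnegative eigenvalues $E^C_1\le E^C_2\le\cdots$ (with multiplicity), $E^C_j\to\infty$, and finite partition function $Z_C=\sum_j e^{-\beta E^C_j}<\infty$. Let $\omega_C,\omega'_C$ be catalyst states diagonal in the eigenbasis of $H_C$, such that $\omega_C\otimes\tau_S\to\omega'_C\otimes\Pi^S_{\max}$ is possible by catalytic thermal operations, and such that $\omega_C$ has average energy $\mathrm{tr}(\omega_CH_C)\le E$ for a finite constant $E\ge E^C_1$. Then $$d_{\rm opt}:=\tfrac12\|\omega_C-\omega'_C\|_1\ \ge\ \frac12\,\frac{f(A)^2\varepsilon_C^2}{Z_C}>0,$$ where $A=Z_S/e^{-\beta E^S_{\max}}$, $f(a)=\frac12\frac{a^2}{a^2+1}$, $\varepsilon_C=\sup_{W\in(0,1)}W\gamma^{E^C_{j(W)}}$ with $\gamma=e^{-\beta}$, and $j(W)=\min\{j\ge1: E^C_{j+1}>E/(1-W)\}$.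
   Context: $\beta>0$ is the inverse temperature of the bath. A transformation $\rho\to\rho'$ on a system with Gibbs state $\tau$ being possible by catalytic thermal operations implies (known fact, may be assumed) that $D_\alpha(\rho\|\tau)\ge D_\alpha(\rho'\|\tau)$ for all $\alpha\ge0$; here the relevant system is $CS$ with Gibbs state $\tau_C\otimes\tau_S$, $\tau_C=e^{-\beta H_C}/Z_C$. For commuting states with eigenvalue vectors $p,q$, $D_\alpha(p\|q)=\frac{1}{\alpha-1}\log\sum_ip_i^\alpha q_i^{1-\alpha}$; in particular $D_{1/2}(p\|q)=-2\log\sum_i\sqrt{p_iq_i}$. For diagonal catalysts with eigenvalues $\omega_j,\omega'_j$ the $\alpha=1/2$ condition reads $\sum_j\sqrt{\omega'_j}\,e^{-\beta E^C_j/2}\ge\sqrt{A}\sum_j\sqrt{\omega_j}\,e^{-\beta E^C_j/2}$. *)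

(* Defs.v *)
From Stdlib Require Import Reals Lra Lia.
Open Scope R_scope.

(* Real power with the convention 0^a = 0 (used for a > 0);
   Stdlib's Rpower would give Rpower 0 a = 1. *)
Definition rpow (x a : R) : R :=
  if Rle_dec x 0 then 0 else Rpower x a.

(* Finite sum over system indices i = 0 .. m-1 (m >= 1). *)
Definition sumS (m : nat) (f : nat -> R) : R := sum_f_R0 f (pred m).

Definition boltz (beta E : R) : R := exp (- beta * E).

Definition ZS (beta : R) (m : nat) (ES : nat -> R) : R :=
  sumS m (fun i => boltz beta (ES i)).

Definition tauS (beta : R) (m : nat) (ES : nat -> R) (i : nat) : R :=
  boltz beta (ES i) / ZS beta m ES.

(* Pure eigenstate |E_max><E_max| of the system (index kmax), as eigenvalue vector. *)
Definition PiMax (kmax i : nat) : R := if Nat.eqb i kmax then 1 else 0.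

(* Renyi divergence for commuting states on C S, with eigenvalue arrays
   p, q : nat (catalyst index) -> nat (system index) -> R, given the value L of
   the (convergent) series sum_j sum_{i<m} p_ji^alpha q_ji^(1-alpha). *)
Definition renyi_series (m : nat) (alpha : R) (p q : nat -> nat -> R) (j : nat) : R :=
  sumS m (fun i => rpow (p j i) alpha * rpow (q j i) (1 - alpha)).

Definition renyi_of_sum (alpha L : R) : R := / (alpha - 1) * ln L.

Definition fA (a : R) : R := / 2 * (a ^ 2 / (a ^ 2 + 1)).

(* The set {W gamma^(E^C_{j(W)}) : W in (0,1)}, with 0-based catalyst indices:
   e k = E^C_{k+1}.  j(W) = min{ j >= 1 : E^C_{j+1} > Ebar/(1-W) } corresponds to
   k = j-1 = min{ k >= 0 : e (k+1) > Ebar/(1-W) }, and E^C_{j(W)} = e k. *)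
Definition eps_set (beta Ebar : R) (e : nat -> R) (x : R) : Prop :=
  exists W k, 0 < W < 1 /\
    e (S k) > Ebar / (1 - W) /\
    (forall k', (k' < k)%nat -> e (S k') <= Ebar / (1 - W)) /\
    x = W * exp (- beta * e k).

(* Main.v *)
Require Import Defs.
From Stdlib Require Import Reals Lra Lia Classical.
From Coquelicot Require Import Coquelicot.
Open Scope R_scope.

Lemma isum_le a b la lb : infinite_sum a la -> infinite_sum b lb -> (forall n, a n <= b n) -> la <= lb.
Proof. intros Ha Hb H.
  apply is_lim_seq_Reals in Ha. apply is_lim_seq_Reals in Hb.
  exact (is_lim_seq_le _ _ _ _ (fun n => sum_growing a b n H) Ha Hb). Qed.
Lemma isum_plus a b la lb : infinite_sum a la -> infinite_sum b lb -> infinite_sum (fun n => a n + b n) (la + lb).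
Proof. intros Ha Hb. apply is_series_Reals in Ha. apply is_series_Reals in Hb. apply is_series_Reals.
  exact (is_series_plus _ _ _ _ Ha Hb). Qed.
Lemma isum_scal c a la : infinite_sum a la -> infinite_sum (fun n => c * a n) (c * la).
Proof. intros Ha. apply is_series_Reals in Ha. apply is_series_Reals.
  exact (is_series_scal _ _ _ Ha). Qed.
Lemma isum_opp a la : infinite_sum a la -> infinite_sum (fun n => - a n) (- la).
Proof. intros Ha. apply is_series_Reals in Ha. apply is_series_Reals.
  exact (is_series_opp _ _ Ha). Qed.
Lemma isum_ext a b la : (forall n, a n = b n) -> infinite_sum a la -> infinite_sum b la.
Proof. intros E Ha. apply is_series_Reals in Ha. apply is_series_Reals.
  exact (is_series_ext _ _ _ E Ha). Qed.
Lemma isum_ex_le a b lb : (forall n, 0 <= a n <= b n) -> infinite_sum b lb -> exists la, infinite_sum a la.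
Proof. intros H Hb. destruct (Rseries_CV_comp a b H (exist _ lb Hb)) as [la Hla]. exists la. exact Hla. Qed.
Lemma isum_partial a l : infinite_sum a l -> (forall n, 0 <= a n) -> forall n, sum_f_R0 a n <= l.
Proof. intros Ha Hp n. exact (sum_incr a n l Ha Hp). Qed.
Lemma isum_term a l : infinite_sum a l -> (forall n, 0 <= a n) -> forall n, a n <= l.
Proof. intros Ha Hp n. apply Rle_trans with (sum_f_R0 a n); [|exact (isum_partial a l Ha Hp n)].
  destruct n. simpl; lra. rewrite tech5. assert (0 <= sum_f_R0 a n) by (apply cond_pos_sum; auto). lra. Qed.
Lemma isum_nonneg a l : infinite_sum a l -> (forall n, 0 <= a n) -> 0 <= l.
Proof. intros Ha Hp. apply Rle_trans with (a 0%nat); [auto|]. exact (isum_term a l Ha Hp 0%nat). Qed.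
Lemma isum_zero : infinite_sum (fun _ => 0) 0.
Proof. intros eps He. exists 0%nat. intros n _. rewrite sum_cte. unfold Rdist. rewrite Rmult_0_l, Rminus_0_r, Rabs_R0. lra. Qed.

Lemma sum_trunc x k n : (k <= n)%nat ->
  sum_f_R0 (fun j => if Nat.leb j k then x j else 0) n = sum_f_R0 x k.
Proof. intro H. induction H.
  - apply sum_eq. intros i Hi. destruct (Nat.leb_spec i k); [reflexivity|lia].
  - rewrite tech5, IHle. destruct (Nat.leb_spec (S m) k); [lia|lra]. Qed.
Lemma isum_trunc x k : infinite_sum (fun j => if Nat.leb j k then x j else 0) (sum_f_R0 x k).
Proof. intros eps He. exists k. intros n Hn. rewrite sum_trunc by lia. unfold Rdist.
  rewrite Rminus_eq_0, Rabs_R0. lra. Qed.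

Lemma sum_single c k n : (k <= n)%nat ->
  sum_f_R0 (fun i => if Nat.eqb i k then c else 0) n = c.
Proof. intro H. induction H.
  - destruct k. simpl. reflexivity. rewrite tech5. rewrite Nat.eqb_refl.
    rewrite (sum_eq _ (fun _ => 0)). rewrite sum_cte. lra.
    intros i Hi. destruct (Nat.eqb_spec i (S k)); [lia|reflexivity].
  - rewrite tech5, IHle. destruct (Nat.eqb_spec (S m) k); [lia|lra]. Qed.

Lemma sum_lb f c n : (forall i, (i <= n)%nat -> c <= f i) -> INR (S n) * c <= sum_f_R0 f n.
Proof. intro H. induction n.
  - simpl. specialize (H 0%nat (le_n _)). lra.
  - rewrite tech5. rewrite S_INR, Rmult_plus_distr_r.
    assert (INR (S n) * c <= sum_f_R0 f n) by (apply IHn; intros; apply H; lia).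
    specialize (H (S n) (le_n _)). lra. Qed.

Lemma least_ex (Q : nat -> Prop) n : Q n -> exists k, Q k /\ forall k', (k' < k)%nat -> ~ Q k'.
Proof. revert Q. induction n as [n IH] using (well_founded_ind Wf_nat.lt_wf). intros Q Hn.
  destruct (classic (exists k', (k' < n)%nat /\ Q k')) as [[k' [Hk' Qk']]|Hno].
  - exact (IH k' Hk' Q Qk').
  - exists n. split; [exact Hn|]. intros k' Hk' Qk'. apply Hno. eauto. Qed.

Lemma rpow_half x : 0 <= x -> rpow x (/2) = sqrt x.
Proof. intro H. unfold rpow. destruct (Rle_dec x 0).
  - assert (x = 0) by lra. subst. rewrite sqrt_0. reflexivity.
  - apply Rpower_sqrt. lra. Qed.

Lemma mono_le (e : nat -> R) : (forall j, e j <= e (S j)) -> forall i j, (i <= j)%nat -> e i <= e j.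
Proof. intros H i j Hij. induction Hij. lra. specialize (H m). lra. Qed.

Lemma exp_le' x y : x <= y -> exp x <= exp y.
Proof. intro H. destruct (Rle_lt_or_eq_dec _ _ H) as [H1|H1]. left; apply exp_increasing; auto. subst; lra. Qed.

Lemma le_sqrt_self x : 0 <= x <= 1 -> x <= sqrt x.
Proof. intros [H0 H1]. assert (Hs : sqrt x <= 1). { rewrite <- sqrt_1. apply sqrt_le_1_alt. lra. }
  pose proof (sqrt_pos x). pose proof (sqrt_sqrt x H0). nra. Qed.

Lemma polyA A : 2 <= A -> (3*A^2+2)^2 <= 4*A*(A^2+1)^2.
Proof. intros H. set (x := A - 2). assert (Hx : 0 <= x) by (unfold x; lra).
  assert (E : 4*A*(A^2+1)^2 - (3*A^2+2)^2 = 4 + 84*x + 140*x^2 + 96*x^3 + 31*x^4 + 4*x^5) by (unfold x; ring).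
  assert (0 <= x^2) by (apply pow_le; lra). assert (0 <= x^3) by (apply pow_le; lra).
  assert (0 <= x^4) by (apply pow_le; lra). assert (0 <= x^5) by (apply pow_le; lra). lra. Qed.

Lemma fA_bound A : 2 <= A -> 0 < fA A /\ fA A <= sqrt A - 1.
Proof. intro H. unfold fA. assert (HA2 : 0 < A^2) by nra.
  split. { apply Rmult_lt_0_compat. lra. apply Rdiv_lt_0_compat; lra. }
  set (r := 1 + / 2 * (A ^ 2 / (A ^ 2 + 1))).
  assert (Hr : r = (3*A^2+2) / (2*(A^2+1))) by (unfold r; field; lra).
  assert (Hr0 : 0 <= r) by (rewrite Hr; apply Rmult_le_pos; [lra| left; apply Rinv_0_lt_compat; lra]).
  assert (Hr2 : r ^ 2 <= A).
  { rewrite Hr. unfold Rdiv. rewrite Rpow_mult_distr, pow_inv.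
    apply Rmult_le_reg_r with ((2 * (A ^ 2 + 1))^2). apply pow_lt; lra.
    rewrite Rmult_assoc, Rinv_l by (apply pow_nonzero; lra). rewrite Rmult_1_r.
    pose proof (polyA A H). nra. }
  assert (r <= sqrt A). { rewrite <- (sqrt_pow2 r Hr0). apply sqrt_le_1_alt. exact Hr2. }
  unfold r in *. lra. Qed.

Lemma pt a b h t : 0 <= a -> 0 <= b -> 0 <= h -> 0 < t ->
  (b - a) * h <= / t * (/ 2 * Rabs (a * a - b * b)) + t / 2 * (h * h).
Proof. intros Ha Hb Hh Ht.
  assert (Hq : (b - a) * (b - a) <= Rabs (a * a - b * b)).
  { destruct (Rle_dec a b).
    - rewrite Rabs_left1 by nra. nra.
    - rewrite Rabs_right by nra. nra. }
  assert (K : 2 * t * ((b - a) * h) <= (b - a) * (b - a) + t * t * (h * h)) by (pose proof (Rle_0_sqr ((b - a) - t * h)); unfold Rsqr in *; nra).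
  assert (E : / t * (/ 2 * Rabs (a * a - b * b)) + t / 2 * (h * h)
            = (Rabs (a * a - b * b) + t * t * (h * h)) / (2 * t)) by (field; lra).
  rewrite E.
  assert (P : 0 <= (Rabs (a*a-b*b) + t*t*(h*h) - 2*t*((b-a)*h)) / (2*t)) by (apply Rmult_le_pos; [lra| left; apply Rinv_0_lt_compat; lra]).
  assert (Q : (Rabs (a*a-b*b) + t*t*(h*h) - 2*t*((b-a)*h)) / (2*t) = (Rabs (a * a - b * b) + t * t * (h * h)) / (2 * t) - (b-a)*h) by (field; lra).
  lra. Qed.

Lemma eps_pos beta Ebar (e : nat -> R) : cv_infty e ->
  exists x, eps_set beta Ebar e x /\ 0 < x.
Proof. intro Hinf. set (T := Ebar / (1 - /2)).
  destruct (Hinf T) as [N HN].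
  destruct (least_ex (fun k => e (S k) > T) N) as [k [Hk Hmin]]. { apply HN. lia. }
  exists (/2 * exp (- beta * e k)). split.
  - exists (/2), k. split; [lra|]. split; [exact Hk|]. split; [|reflexivity].
    intros k' Hk'. apply Rnot_lt_le. exact (Hmin k' Hk').
  - apply Rmult_lt_0_compat. lra. apply exp_pos. Qed.

Lemma eps_ub beta (hbeta : 0 < beta) (e : nat -> R) (he0 : forall j, 0 <= e j)
  (hemono : forall j, e j <= e (S j)) ZC (hZ : 0 < ZC) (om : nat -> R)
  (hom : forall j, 0 <= om j) (hom1 : infinite_sum om 1) Ebar (hEbar : e 0%nat <= Ebar)
  (hen : exists Eom, infinite_sum (fun j => om j * e j) Eom /\ Eom <= Ebar)
  U (hU : infinite_sum (fun j => sqrt (om j * (boltz beta (e j) / ZC))) U) :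
  forall x, eps_set beta Ebar e x -> x <= sqrt ZC * U.
Proof. intros x [W [k [HW [HT [Hmin Hx]]]]]. destruct hen as [Eom [HE HEb]].
  set (T := Ebar / (1 - W)) in *. set (T' := e (S k)).
  assert (HT0 : 0 <= T) by (unfold T; apply Rmult_le_pos; [pose proof (he0 0%nat); lra| left; apply Rinv_0_lt_compat; lra]).
  assert (HTE : T * (1 - W) = Ebar) by (unfold T; field; lra).
  set (Pk := sum_f_R0 om k).
  assert (Hc : infinite_sum (fun j => om j * e j + (- T' * om j) + T' * (if Nat.leb j k then om j else 0))
                 (Eom + - T' * 1 + T' * Pk)).
  { apply isum_plus. apply isum_plus. exact HE. apply isum_scal. exact hom1.
    apply isum_scal. apply isum_trunc. }
  assert (Hc0 : 0 <= Eom + - T' * 1 + T' * Pk).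
  { apply (isum_nonneg _ _ Hc). intro j. destruct (Nat.leb_spec j k).
    - pose proof (hom j). pose proof (he0 j). nra.
    - assert (T' <= e j) by (apply mono_le; auto). pose proof (hom j). nra. }
  assert (HPk : W <= Pk).
  { assert (T * (1 - W) <= T' * (1 - W)) by (apply Rmult_le_compat_r; unfold T' in *; lra).
    assert (HH : T' * (1 - Pk) <= T' * (1 - W)) by lra.
    apply Rmult_le_reg_l in HH; [lra|unfold T' in *; lra]. }
  set (E := exp (- beta * e k)).
  assert (HE0 : 0 < E) by apply exp_pos.
  assert (HE1 : E <= 1). { unfold E. rewrite <- exp_0. apply exp_le'. pose proof (he0 k). nra. }
  set (c := E / ZC).
  assert (Hc0' : 0 <= c) by (unfold c; apply Rmult_le_pos; [lra|left; apply Rinv_0_lt_compat; lra]).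
  assert (HUge : sqrt c * Pk <= U).
  { apply Rle_trans with (sum_f_R0 (fun j => sqrt (om j * (boltz beta (e j) / ZC))) k).
    - unfold Pk. rewrite scal_sum. apply sum_Rle. intros j Hj.
      assert (Hg : 0 <= boltz beta (e j) / ZC) by (unfold boltz; apply Rmult_le_pos; [left; apply exp_pos|left; apply Rinv_0_lt_compat; lra]).
      rewrite sqrt_mult by auto.
      apply Rmult_le_compat. apply hom. apply sqrt_pos.
      apply le_sqrt_self. split. apply hom. apply (isum_term om 1 hom1 hom).
      apply sqrt_le_1_alt. unfold c, boltz. unfold Rdiv. apply Rmult_le_compat_r.
      left; apply Rinv_0_lt_compat; lra. apply exp_le'.
      assert (e j <= e k) by (apply mono_le; auto). nra.
    - apply isum_partial. exact hU. intro; apply sqrt_pos. }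
  assert (Hsc : sqrt ZC * sqrt c = sqrt E).
  { rewrite <- sqrt_mult by lra. f_equal. unfold c. field. lra. }
  rewrite Hx. fold E.
  assert (E <= sqrt E) by (apply le_sqrt_self; lra).
  assert (sqrt ZC * (sqrt c * Pk) <= sqrt ZC * U) by (apply Rmult_le_compat_l; [apply sqrt_pos|exact HUge]).
  assert (0 <= sqrt E) by apply sqrt_pos.
  nra. Qed.

Theorem mainTheorem8
  (beta : R) (hbeta : 0 < beta)
  (m : nat) (hm : (2 <= m)%nat) (ES : nat -> R) (kmax : nat) (hk : (kmax < m)%nat)
  (hmax : forall i, (i < m)%nat -> ES i <= ES kmax)
  (e : nat -> R) (he0 : forall j, 0 <= e j) (hemono : forall j, e j <= e (S j))
  (heinf : cv_infty e)
  (ZC : R) (hZC : infinite_sum (fun j => boltz beta (e j)) ZC)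
  (om om' : nat -> R)
  (hom : forall j, 0 <= om j) (hom1 : infinite_sum om 1)
  (hom' : forall j, 0 <= om' j) (hom'1 : infinite_sum om' 1)
  (Ebar : R) (hEbar : e 0%nat <= Ebar)
  (hen : exists Eom, infinite_sum (fun j => om j * e j) Eom /\ Eom <= Ebar)
  (hCTO : forall alpha L L', 0 < alpha < 1 ->
     infinite_sum (renyi_series m alpha
        (fun j i => om j * tauS beta m ES i)
        (fun j i => boltz beta (e j) / ZC * tauS beta m ES i)) L ->
     infinite_sum (renyi_series m alpha
        (fun j i => om' j * PiMax kmax i)
        (fun j i => boltz beta (e j) / ZC * tauS beta m ES i)) L' ->
     renyi_of_sum alpha L >= renyi_of_sum alpha L')
  (epsC : R) (hepsC : is_lub (eps_set beta Ebar e) epsC)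
  (dopt : R) (hd : infinite_sum (fun j => / 2 * Rabs (om j - om' j)) dopt) :
  let A := ZS beta m ES / boltz beta (ES kmax) in
  dopt >= / 2 * (fA A ^ 2 * epsC ^ 2 / ZC) /\ / 2 * (fA A ^ 2 * epsC ^ 2 / ZC) > 0.
Proof.
  intro A.
  assert (Hb : forall x, 0 < boltz beta x) by (intro; apply exp_pos).
  assert (HZC : 0 < ZC).
  { apply Rlt_le_trans with (boltz beta (e 0%nat)). apply Hb.
    apply (isum_term _ _ hZC). intro; left; apply Hb. }
  set (g := fun j => boltz beta (e j) / ZC).
  assert (Hg0 : forall j, 0 < g j) by (intro; unfold g; apply Rdiv_lt_0_compat; auto).
  assert (Hg1 : infinite_sum g 1).
  { apply isum_ext with (fun j => / ZC * boltz beta (e j)).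
    intro; unfold g; field; lra.
    replace 1 with (/ ZC * ZC) by (field; lra). apply isum_scal. exact hZC. }
  set (bk := boltz beta (ES kmax)).
  assert (HZS : INR m * bk <= ZS beta m ES).
  { unfold ZS, sumS. replace (INR m) with (INR (S (pred m))) by (f_equal; lia).
    apply sum_lb. intros i Hi. unfold bk, boltz. apply exp_le'.
    assert (ES i <= ES kmax) by (apply hmax; lia). nra. }
  assert (Hm2 : 2 <= INR m) by (replace 2 with (INR 2) by (simpl; lra); apply le_INR; exact hm).
  assert (Hbk : 0 < bk) by apply Hb.
  assert (HA : 2 <= A).
  { unfold A. fold bk. apply Rmult_le_reg_r with bk. exact Hbk.
    unfold Rdiv. rewrite Rmult_assoc, Rinv_l by lra. nra. }
  assert (HZS0 : 0 < ZS beta m ES) by nra.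
  assert (Htk : tauS beta m ES kmax = / A) by (unfold tauS, A; fold bk; field; lra).
  assert (Hsum_tau : sumS m (tauS beta m ES) = 1).
  { unfold sumS, tauS. unfold Rdiv. rewrite <- scal_sum. fold (sumS m (fun i => boltz beta (ES i))).
    fold (ZS beta m ES). field. lra. }
  assert (Htau0 : forall i, 0 <= tauS beta m ES i) by (intro; unfold tauS; left; apply Rdiv_lt_0_compat; auto).
  set (u := fun j => sqrt (om j * g j)).
  set (v := fun j => sqrt (om' j * g j)).
  assert (Hsq : forall x y, 0 <= x -> 0 <= y -> 0 <= sqrt (x * y) <= / 2 * (x + y)).
  { intros x y Hx Hy. split. apply sqrt_pos. rewrite sqrt_mult by auto.
    pose proof (sqrt_sqrt x Hx). pose proof (sqrt_sqrt y Hy).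
    pose proof (Rle_0_sqr (sqrt x - sqrt y)). unfold Rsqr in *. nra. }
  assert (Hhalf : forall a, infinite_sum a 1 -> infinite_sum (fun j => / 2 * (a j + g j)) 1).
  { intros a Ha. replace 1 with (/ 2 * (1 + 1)) by field. apply isum_scal. apply isum_plus; auto. }
  destruct (isum_ex_le u (fun j => / 2 * (om j + g j)) 1) as [U HU].
  { intro j. apply Hsq. auto. left; auto. } { apply Hhalf; auto. }
  destruct (isum_ex_le v (fun j => / 2 * (om' j + g j)) 1) as [V HV].
  { intro j. apply Hsq. auto. left; auto. } { apply Hhalf; auto. }
  assert (Hub : epsC <= sqrt ZC * U).
  { apply (proj2 hepsC). intros x Hx. apply (eps_ub beta hbeta e he0 hemono ZC HZC om hom hom1 Ebar hEbar hen U HU x Hx). }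
  destruct (eps_pos beta Ebar e heinf) as [x0 [Hx0 Hx0p]].
  assert (Heps : 0 < epsC) by (pose proof (proj1 hepsC x0 Hx0); lra).
  assert (HsZ : 0 < sqrt ZC) by (apply sqrt_lt_R0; auto).
  assert (HU0 : 0 < U).
  { destruct (Rle_dec U 0) as [HU'|HU']. 2: lra.
    assert (sqrt ZC * U <= 0) by nra. lra. }
  assert (Hhalf1 : 1 - / 2 = / 2) by field.
  set (sk := sqrt (/ A)).
  assert (HL : infinite_sum (renyi_series m (/ 2)
        (fun j i => om j * tauS beta m ES i)
        (fun j i => boltz beta (e j) / ZC * tauS beta m ES i)) U).
  { apply isum_ext with u; [|exact HU]. intro j. unfold renyi_series. rewrite Hhalf1.
    rewrite <- (Rmult_1_r (u j)). rewrite <- Hsum_tau. unfold sumS. rewrite scal_sum.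
    apply sum_eq. intros i _. fold (g j).
    rewrite !rpow_half by (apply Rmult_le_pos; auto; left; auto).
    unfold u. rewrite <- sqrt_mult by (apply Rmult_le_pos; auto; left; auto).
    replace (om j * tauS beta m ES i * (g j * tauS beta m ES i))
      with ((om j * g j) * (tauS beta m ES i * tauS beta m ES i)) by ring.
    assert (0 <= om j * g j) by (apply Rmult_le_pos; auto; left; auto).
    rewrite (sqrt_mult (om j * g j) (tauS beta m ES i * tauS beta m ES i)) by (auto; apply Rmult_le_pos; auto).
    rewrite sqrt_square by auto. ring. }
  assert (HL' : infinite_sum (renyi_series m (/ 2)
        (fun j i => om' j * PiMax kmax i)
        (fun j i => boltz beta (e j) / ZC * tauS beta m ES i)) (V * sk)).
  { apply isum_ext with (fun j => v j * sk); [|]. 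
    2: { replace (V * sk) with (sk * V) by ring.
         apply isum_ext with (fun j => sk * v j). intro; ring. apply isum_scal. exact HV. }
    intro j. unfold renyi_series, sumS. rewrite Hhalf1.
    rewrite <- (sum_single (v j * sk) kmax (pred m)) by lia.
    apply sum_eq. intros i _. fold (g j). unfold PiMax.
    destruct (Nat.eqb_spec i kmax) as [->|Hne].
    - rewrite Rmult_1_r. rewrite !rpow_half by (try apply Rmult_le_pos; auto; left; auto).
      rewrite Htk. unfold v, sk.
      assert (0 <= / A) by (left; apply Rinv_0_lt_compat; lra).
      rewrite (sqrt_mult (g j) (/ A)) by (auto; left; auto).
      rewrite (sqrt_mult (om' j) (g j)) by (auto; left; auto). ring.
    - rewrite Rmult_0_r. unfold rpow at 1. destruct (Rle_dec 0 0); [ring|lra]. }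
  assert (Hsk : 0 < sk) by (apply sqrt_lt_R0; apply Rinv_0_lt_compat; lra).
  assert (HV0 : 0 < V).
  { destruct (classic (exists j, 0 < om' j)) as [[j Hj]|Hno].
    - apply Rlt_le_trans with (v j). unfold v. apply sqrt_lt_R0. apply Rmult_lt_0_compat; auto.
      apply (isum_term _ _ HV). intro; apply sqrt_pos.
    - exfalso. assert (Z : forall j, om' j = 0).
      { intro j. pose proof (hom' j). destruct (Rle_lt_or_eq_dec _ _ H); [exfalso; eauto|auto]. }
      assert (infinite_sum om' 0) by (apply isum_ext with (fun _ => 0); [intro; rewrite Z; auto|apply isum_zero]).
      pose proof (uniqueness_sum _ _ _ hom'1 H). lra. }
  pose proof (hCTO (/ 2) U (V * sk) ltac:(lra) HL HL') as Hr.
  unfold renyi_of_sum in Hr. replace (/ (/ 2 - 1)) with (-2) in Hr by field.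
  assert (HUV : U <= V * sk).
  { destruct (Rle_dec U (V * sk)) as [|Hn]; auto. exfalso.
    assert (ln (V * sk) < ln U) by (apply ln_increasing; [apply Rmult_lt_0_compat|]; lra). lra. }
  set (s := sqrt A).
  assert (Hs : s * s = A) by (apply sqrt_sqrt; lra).
  assert (Hs0 : 0 <= s) by apply sqrt_pos.
  assert (Hs1 : 1 < s) by nra.
  assert (Hsk' : sk = / s) by (unfold sk, s; apply sqrt_inv).
  assert (HVU : s * U <= V).
  { rewrite Hsk' in HUV. apply Rmult_le_reg_r with (/ s). apply Rinv_0_lt_compat; lra.
    replace (s * U * / s) with U by (field; lra). exact HUV. }
  set (t := (s - 1) * U).
  assert (Ht : 0 < t) by (unfold t; apply Rmult_lt_0_compat; lra).
  assert (HD : V + - U <= / t * dopt + t / 2 * 1).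
  { apply (isum_le (fun j => v j + - u j) (fun j => / t * (/ 2 * Rabs (om j - om' j)) + t / 2 * g j)).
    apply isum_plus; [exact HV|apply isum_opp; exact HU].
    apply isum_plus; apply isum_scal; auto.
    intro j. unfold u, v.
    rewrite !sqrt_mult by (auto; left; auto).
    pose proof (pt (sqrt (om j)) (sqrt (om' j)) (sqrt (g j)) t (sqrt_pos _) (sqrt_pos _) (sqrt_pos _) Ht) as P.
    rewrite !sqrt_sqrt in P by (auto; left; auto). lra. }
  assert (Ht2 : t * t / 2 <= dopt).
  { assert (t <= / t * dopt + t / 2) by (unfold t at 1; nra).
    apply Rmult_le_compat_l with (r := t) in H; [|lra].
    replace (t * (/ t * dopt + t / 2)) with (dopt + t * t / 2) in H by (field; lra). lra. }
  destruct (fA_bound A HA) as [Hf0 Hf1]. fold s in Hf1.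
  assert (HeZ : epsC ^ 2 / ZC <= U ^ 2).
  { apply Rmult_le_reg_r with ZC; auto. unfold Rdiv. rewrite Rmult_assoc, Rinv_l by lra.
    pose proof (sqrt_sqrt ZC (Rlt_le _ _ HZC)). nra. }
  assert (Hfe : fA A ^ 2 * epsC ^ 2 / ZC <= t * t).
  { unfold t. replace (fA A ^ 2 * epsC ^ 2 / ZC) with (fA A ^ 2 * (epsC ^ 2 / ZC)) by (field; lra).
    assert (fA A ^ 2 <= (s - 1) ^ 2) by nra.
    assert (0 <= epsC ^ 2 / ZC) by (apply Rmult_le_pos; [nra|left; apply Rinv_0_lt_compat; lra]).
    nra. }
  split.
  - lra.
  - apply Rlt_gt. apply Rmult_lt_0_compat. lra. apply Rdiv_lt_0_compat; [|lra].
    apply Rmult_lt_0_compat; apply pow_lt; lra.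
Qed.
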